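(* Let $F$ be a field with $\mathrm{char}\,F\ne2,3$ and let $\mathrm{Gr}_3$ be the Grassmann algebra over $F$ of a 3-dimensional vector space. Then $\mathrm{rb}(\mathrm{Gr}_3)=3$.
   Context: A linear operator $R$ on $A$ is a Rota–Baxter operator of weight $0$ if $R(x)R(y)=R(R(x)y+xR(y))$ for all $x,y\in A$. The RB-index $\mathrm{rb}(A)$ is the least $n\in\mathbb N$ such that $R^n=0$ for every Rota–Baxter operator $R$ of weight zero on $A$. *)

(* Defs.v *)
From HB Require Import structures.
From mathcomp Require Import all_boot all_order all_algebra.
Set Implicit Arguments. Unset Strict Implicit. Unset Printing Implicit Defensive.
Import Order.TTheory GRing.Theory Num.Theory.
Local Open Scope ring_scope.

(* The Grassmann (exterior) algebra Gr_n over F of an n-dimensional vector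
   space with basis e_0,...,e_{n-1}: as an F-vector space it has basis
   e_S (S a subset of {0..n-1}), e_S = e_{s1} ... e_{sk} with s1 < ... < sk.
   Elements are coefficient functions S |-> coefficient of e_S. *)
Definition Grass (F : fieldType) (n : nat) := {ffun {set 'I_n} -> F^o}.

(* sign of e_S e_T = (-1)^(number of pairs s in S, t in T with t < s) e_{S u T} *)
Definition gsign (F : fieldType) (n : nat) (S T : {set 'I_n}) : F :=
  (-1) ^+ #|[set p : 'I_n * 'I_n | [&& p.1 \in S, p.2 \in T & (p.2 < p.1)%N]]|.

Definition gmul (F : fieldType) (n : nat) (x y : Grass F n) : Grass F n :=
  [ffun U : {set 'I_n} =>
     \sum_(S : {set 'I_n}) \sum_(T : {set 'I_n})
        (if [disjoint S & T] && (S :|: T == U)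
         then @gsign F n S T * x S * y T else 0)].

Definition is_RB0 (F : fieldType) (V : lmodType F) (mul : V -> V -> V)
  (R : {linear V -> V}) : Prop :=
  forall x y : V, mul (R x) (R y) = R (mul (R x) y + mul x (R y)).

Definition pow_zero (F : fieldType) (V : lmodType F) (R : V -> V) (m : nat) :=
  forall x : V, iter m R x = 0.

Definition rb_index_is (F : fieldType) (V : lmodType F) (mul : V -> V -> V)
  (n : nat) : Prop :=
  (forall R : {linear V -> V}, is_RB0 mul R -> pow_zero R n) /\
  (forall m : nat,
     (forall R : {linear V -> V}, is_RB0 mul R -> pow_zero R m) -> (n <= m)%N).

(* Main.v *)
Require Import Defs.
From HB Require Import structures.
From mathcomp Require Import all_boot all_order all_algebra.
From mathcomp Require Import ring.
Set Implicit Arguments. Unset Strict Implicit. Unset Printing Implicit Defensive.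
Import GRing.Theory.
Local Open Scope ring_scope.

Definition i0 : 'I_3 := @Ordinal 3 0 isT.
Definition i1 : 'I_3 := @Ordinal 3 1 isT.
Definition i2 : 'I_3 := @Ordinal 3 2 isT.

Definition st (b0 b1 b2 : bool) : {set 'I_3} := [set i : 'I_3 | nth false [:: b0; b1; b2] i].
Arguments st : simpl never.

Lemma ord3P (P : 'I_3 -> Prop) : P i0 -> P i1 -> P i2 -> forall i, P i.
Proof.
move=> h0 h1 h2 [[|[|[|k]]] hk] //.
- by rewrite (_ : Ordinal hk = i0) //; apply: val_inj.
- by rewrite (_ : Ordinal hk = i1) //; apply: val_inj.
- by rewrite (_ : Ordinal hk = i2) //; apply: val_inj.
Qed.

Lemma st_surj (S : {set 'I_3}) : S = st (i0 \in S) (i1 \in S) (i2 \in S).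
Proof. by apply/setP; apply: ord3P; rewrite inE. Qed.

Lemma st_eq b0 b1 b2 c0 c1 c2 :
  (st b0 b1 b2 == st c0 c1 c2) = [&& b0 == c0, b1 == c1 & b2 == c2].
Proof.
apply/eqP/and3P => [h|[/eqP-> /eqP-> /eqP->]] //.
have := congr1 (fun S : {set 'I_3} => i0 \in S) h; have := congr1 (fun S : {set 'I_3} => i1 \in S) h;
have := congr1 (fun S : {set 'I_3} => i2 \in S) h; rewrite !inE /= => -> -> ->.
by rewrite !eqxx.
Qed.

Lemma stU b0 b1 b2 c0 c1 c2 :
  st b0 b1 b2 :|: st c0 c1 c2 = st (b0 || c0) (b1 || c1) (b2 || c2).
Proof. by apply/setP; apply: ord3P; rewrite !inE. Qed.

Lemma st_disj b0 b1 b2 c0 c1 c2 :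
  [disjoint st b0 b1 b2 & st c0 c1 c2] = ~~ [|| b0 && c0, b1 && c1 | b2 && c2].
Proof.
apply/pred0P/idP.
  move=> h; have := h i0; have := h i1; have := h i2; rewrite /= !inE /= => -> -> ->.
  by [].
move=> h; apply: ord3P; rewrite /= !inE /=; move: h;
  by case: b0; case: b1; case: b2; case: c0; case: c1; case: c2.
Qed.

Definition gn (S T : {set 'I_3}) :=
  #|[set p : 'I_3 * 'I_3 | [&& p.1 \in S, p.2 \in T & (p.2 < p.1)%N]]|.

Lemma gn_st b0 b1 b2 c0 c1 c2 :
  gn (st b0 b1 b2) (st c0 c1 c2) = ((b1 && c0) + (b2 && c0) + (b2 && c1))%N.
Proof.
rewrite /gn; set A := [set _ | _].
rewrite -sum1_card big_mkcond /=.
pose G (i j : 'I_3) := (if (i,j) \in A then 1 else 0)%N.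
rewrite (eq_bigr (fun p : 'I_3 * 'I_3 => G p.1 p.2)); last by move=> [].
rewrite -(pair_bigA _ G) /= !big_ord_recr !big_ord0 /G /A /= !inE /=; clear.
by case: b0; case: b1; case: b2; case: c0; case: c1; case: c2.
Qed.

Lemma gsign_st (F : fieldType) b0 b1 b2 c0 c1 c2 :
  @gsign F 3 (st b0 b1 b2) (st c0 c1 c2) =
  (-1) ^+ ((b1 && c0) + (b2 && c0) + (b2 && c1))%N.
Proof. by rewrite -(gn_st b0 b1 b2 c0 c1 c2). Qed.

Lemma sum_sets (M : nmodType) (G : {set 'I_3} -> M) :
  \sum_(S : {set 'I_3}) G S =
  \sum_(b0 : bool) \sum_(b1 : bool) \sum_(b2 : bool) G (st b0 b1 b2).
Proof.
pose h (p : bool * bool * bool) := st p.1.1 p.1.2 p.2.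
pose g (S : {set 'I_3}) := (i0 \in S, i1 \in S, i2 \in S).
rewrite (reindex h); last first.
  exists g => [[[x y] z]|S] _; rewrite /g /h /=.
    by rewrite !inE.
  by rewrite -st_surj.
by rewrite [RHS]pair_bigA [RHS]pair_bigA.
Qed.

Definition V (F : fieldType) := Grass F 3.

Lemma gmulE (F : fieldType) (x y : Grass F 3) u0 u1 u2 :
  gmul x y (st u0 u1 u2) =
  \sum_(s0 : bool) \sum_(s1 : bool) \sum_(s2 : bool)
  \sum_(t0 : bool) \sum_(t1 : bool) \sum_(t2 : bool)
   (if ~~ [|| s0 && t0, s1 && t1 | s2 && t2] &&
       [&& (s0 || t0) == u0, (s1 || t1) == u1 & (s2 || t2) == u2]
    then (-1) ^+ ((s1 && t0) + (s2 && t0) + (s2 && t1))%N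
         * x (st s0 s1 s2) * y (st t0 t1 t2) else 0).
Proof.
rewrite ffunE sum_sets; apply: eq_bigr => s0 _; apply: eq_bigr => s1 _;
apply: eq_bigr => s2 _; rewrite sum_sets; apply: eq_bigr => t0 _;
apply: eq_bigr => t1 _; apply: eq_bigr => t2 _.
by rewrite st_disj stU st_eq gsign_st.
Qed.

Lemma gm_000 (F : fieldType) (x y : Grass F 3) :
  gmul x y (st false false false) = x (st false false false) * y (st false false false).
Proof. rewrite gmulE !big_bool /=; ring. Qed.

Lemma gm_001 (F : fieldType) (x y : Grass F 3) :
  gmul x y (st false false true) = x (st false false false) * y (st false false true) + x (st false false true) * y (st false false false).
Proof. rewrite gmulE !big_bool /=; ring. Qed.

Lemma gm_010 (F : fieldType) (x y : Grass F 3) :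
  gmul x y (st false true false) = x (st false false false) * y (st false true false) + x (st false true false) * y (st false false false).
Proof. rewrite gmulE !big_bool /=; ring. Qed.

Lemma gm_011 (F : fieldType) (x y : Grass F 3) :
  gmul x y (st false true true) = x (st false false false) * y (st false true true) - x (st false false true) * y (st false true false) + x (st false true false) * y (st false false true) + x (st false true true) * y (st false false false).
Proof. rewrite gmulE !big_bool /=; ring. Qed.

Lemma gm_100 (F : fieldType) (x y : Grass F 3) :
  gmul x y (st true false false) = x (st false false false) * y (st true false false) + x (st true false false) * y (st false false false).
Proof. rewrite gmulE !big_bool /=; ring. Qed.

Lemma gm_101 (F : fieldType) (x y : Grass F 3) :
  gmul x y (st true false true) = x (st false false false) * y (st true false true) - x (st false false true) * y (st true false false) + x (st true false false) * y (st false false true) + x (st true false true) * y (st false false false).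
Proof. rewrite gmulE !big_bool /=; ring. Qed.

Lemma gm_110 (F : fieldType) (x y : Grass F 3) :
  gmul x y (st true true false) = x (st false false false) * y (st true true false) - x (st false true false) * y (st true false false) + x (st true false false) * y (st false true false) + x (st true true false) * y (st false false false).
Proof. rewrite gmulE !big_bool /=; ring. Qed.

Lemma gm_111 (F : fieldType) (x y : Grass F 3) :
  gmul x y (st true true true) = x (st false false false) * y (st true true true) + x (st false false true) * y (st true true false) - x (st false true false) * y (st true false true) + x (st false true true) * y (st true false false) + x (st true false false) * y (st false true true) - x (st true false true) * y (st false true false) + x (st true true false) * y (st false false true) + x (st true true true) * y (st false false false).
Proof. rewrite gmulE !big_bool /=; ring. Qed.

Lemma cD (F : fieldType) (f g : Grass F 3) S : (f + g) S = f S + g S.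
Proof. by rewrite ffunE. Qed.
Lemma cB (F : fieldType) (f g : Grass F 3) S : (f - g) S = f S - g S.
Proof. by rewrite !ffunE. Qed.
Lemma cN (F : fieldType) (f : Grass F 3) S : (- f) S = - f S.
Proof. by rewrite !ffunE. Qed.
Lemma cZ (F : fieldType) (k : F) (f : Grass F 3) S : (k *: f) S = k * f S.
Proof. by rewrite !ffunE. Qed.
Lemma c0 (F : fieldType) S : (0 : Grass F 3) S = 0.
Proof. by rewrite !ffunE. Qed.

Ltac coords := apply/ffunP; let U := fresh "U" in intro U; rewrite (st_surj U);
  case: (i0 \in U); case: (i1 \in U); case: (i2 \in U).
Ltac gsimp := repeat rewrite ?gm_000 ?gm_001 ?gm_010 ?gm_011 ?gm_100 ?gm_101 ?gm_110 ?gm_111 ?cD ?cB ?cN ?cZ ?c0.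

Lemma gmulA (F : fieldType) (x y z : Grass F 3) :
  gmul x (gmul y z) = gmul (gmul x y) z.
Proof. coords; gsimp; ring. Qed.

Local Notation "x ** y" := (gmul x y) (at level 40, left associativity).
Local Notation sE := (st false false false).
Local Notation sABC := (st true true true).

Definition e0 (F : fieldType) : Grass F 3 :=
  [ffun S : {set 'I_3} => if [|| i0 \in S, i1 \in S | i2 \in S] then 0 else 1].
Definition cc (F : fieldType) : Grass F 3 :=
  [ffun S : {set 'I_3} => if [&& i0 \in S, i1 \in S & i2 \in S] then 1 else 0].
Arguments e0 {F}. Arguments cc {F}.
Definition inN (F : fieldType) (x : Grass F 3) := x sE = 0.

Lemma mem_st0 b0 b1 b2 : (i0 \in st b0 b1 b2) = b0. Proof. by rewrite inE. Qed.
Lemma mem_st1 b0 b1 b2 : (i1 \in st b0 b1 b2) = b1. Proof. by rewrite inE. Qed.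
Lemma mem_st2 b0 b1 b2 : (i2 \in st b0 b1 b2) = b2. Proof. by rewrite inE. Qed.

Lemma e0_st (F : fieldType) b0 b1 b2 :
  (e0 : Grass F 3) (st b0 b1 b2) = if [|| b0, b1 | b2] then 0 else 1.
Proof. by rewrite ffunE !inE. Qed.
Lemma cc_st (F : fieldType) b0 b1 b2 :
  (cc : Grass F 3) (st b0 b1 b2) = if [&& b0, b1 & b2] then 1 else 0.
Proof. by rewrite ffunE !inE. Qed.
Ltac gs := gsimp; rewrite ?e0_st ?cc_st /=.

Lemma gmulDl (F : fieldType) (x y z : Grass F 3) : (x + y) ** z = x ** z + y ** z.
Proof. coords; gs; ring. Qed.
Lemma gmulDr (F : fieldType) (x y z : Grass F 3) : x ** (y + z) = x ** y + x ** z.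
Proof. coords; gs; ring. Qed.
Lemma gmulBl (F : fieldType) (x y z : Grass F 3) : (x - y) ** z = x ** z - y ** z.
Proof. coords; gs; ring. Qed.
Lemma gmulBr (F : fieldType) (x y z : Grass F 3) : x ** (y - z) = x ** y - x ** z.
Proof. coords; gs; ring. Qed.
Lemma gmulZl (F : fieldType) (k : F) (x y : Grass F 3) : (k *: x) ** y = k *: (x ** y).
Proof. coords; gs; ring. Qed.
Lemma gmulZr (F : fieldType) (k : F) (x y : Grass F 3) : x ** (k *: y) = k *: (x ** y).
Proof. coords; gs; ring. Qed.
Lemma gmul0l (F : fieldType) (x : Grass F 3) : 0 ** x = 0.
Proof. coords; gs; ring. Qed.
Lemma gmul0r (F : fieldType) (x : Grass F 3) : x ** 0 = 0.
Proof. coords; gs; ring. Qed.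
Lemma gmul1l (F : fieldType) (x : Grass F 3) : e0 ** x = x.
Proof. coords; gs; ring. Qed.
Lemma gmul1r (F : fieldType) (x : Grass F 3) : x ** e0 = x.
Proof. coords; gs; ring. Qed.
Lemma ccl (F : fieldType) (x : Grass F 3) : cc ** x = x sE *: cc.
Proof. coords; gs; ring. Qed.
Lemma ccr (F : fieldType) (x : Grass F 3) : x ** cc = x sE *: cc.
Proof. coords; gs; ring. Qed.
Lemma G2 (F : fieldType) (x : Grass F 3) : inN x -> x ** x = (x ** x) sABC *: cc.
Proof. rewrite /inN => h; coords; gs; rewrite ?h; ring. Qed.
Lemma G3 (F : fieldType) (x y : Grass F 3) : inN x -> inN y -> (x ** y) ** x = 0.
Proof. rewrite /inN => h h'; coords; gs; rewrite ?h ?h'; ring. Qed.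
Lemma G4 (F : fieldType) (x y : Grass F 3) : inN x ->
  x ** y + y ** x = (2%:R * y sE) *: x + ((x ** y + y ** x) sABC - 2%:R * y sE * x sABC) *: cc.
Proof. rewrite /inN => h; coords; gs; rewrite ?h; ring. Qed.
Lemma cube (F : fieldType) (u : Grass F 3) :
  (u ** u) ** u - (3%:R * u sE) *: (u ** u) + (3%:R * u sE ^+ 2) *: u - (u sE ^+ 3) *: e0 = 0.
Proof. coords; gs; ring. Qed.





Lemma one_neq0 (F : fieldType) : (e0 : Grass F 3) != 0.
Proof. apply/eqP => /(congr1 (fun v : Grass F 3 => v sE)); rewrite e0_st c0 /=; exact/eqP/oner_neq0. Qed.

Lemma ImN (F : fieldType) (R : {linear Grass F 3 -> Grass F 3}) :
  is_RB0 (@gmul F 3) R -> forall x, inN (R x).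
Proof.
move=> HR x; rewrite /inN; set al := R x sE.
apply/eqP; apply/negP => /negP nal.
pose o (x y : Grass F 3) := R x ** y + x ** R y.
have e2 : R x ** R x = R (o x x) by rewrite HR.
have e3 : (R x ** R x) ** R x = R (o (o x x) x) by rewrite e2 HR.
have hc := cube (R x); rewrite -/al e3 e2 in hc.
pose w := o (o x x) x - (3%:R * al) *: o x x + (3%:R * al ^+ 2) *: x.
have ew : R w = (al ^+ 3) *: e0.
  by apply/eqP; rewrite -subr_eq0 -hc /w !linearD !linearN !linearZZ.
pose w' := (al ^+ 3)^-1 *: w.
have ew' : R w' = e0 by rewrite /w' linearZZ ew scalerA mulVf ?scale1r // expf_neq0.
have := HR w' w'; rewrite ew' gmul1l gmul1r gmul1l linearD ew' => h.
have h1 : (e0 : Grass F 3) = 0 by apply/(addrI e0); rewrite addr0 -h.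
by move: (one_neq0 F); rewrite h1 eqxx.
Qed.

Lemma kcc_l (F : fieldType) (k : F) (y : Grass F 3) : (k *: cc) ** y = y sE *: (k *: cc).
Proof. by rewrite gmulZl ccl !scalerA mulrC. Qed.
Lemma kcc_r (F : fieldType) (k : F) (y : Grass F 3) : y ** (k *: cc) = y sE *: (k *: cc).
Proof. by rewrite gmulZr ccr !scalerA mulrC. Qed.
Lemma kcc_l0 (F : fieldType) (k : F) (y : Grass F 3) : inN y -> (k *: cc) ** y = 0.
Proof. by rewrite kcc_l /inN => ->; rewrite scale0r. Qed.
Lemma kcc_r0 (F : fieldType) (k : F) (y : Grass F 3) : inN y -> y ** (k *: cc) = 0.
Proof. by rewrite kcc_r /inN => ->; rewrite scale0r. Qed.
Lemma zm1 (M : zmodType) (p q r : M) : (p + q) - (q + r) = p - r.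
Proof. by rewrite opprD addrA addrK. Qed.
Lemma half2 (F : fieldType) (V : lmodType F) (v : V) : (2%:R : F) != 0 -> 2%:R^-1 *: (v + v) = v.
Proof. by move=> h; rewrite -mulr2n -scaler_nat scalerA mulVf // scale1r. Qed.
Lemma split2 (F : fieldType) (v w : Grass F 3) : (2%:R : F) != 0 ->
  v = 2%:R^-1 *: (v - w) + 2%:R^-1 *: (v + w).
Proof. by move=> h; rewrite -scalerDr addrACA addNr addr0 half2. Qed.

Lemma RZ (F : fieldType) (R : {linear Grass F 3 -> Grass F 3}) (k : F) (v : Grass F 3) :
  R (k *: v) = k *: R v.
Proof. exact: linearZZ. Qed.
Lemma RD (F : fieldType) (R : {linear Grass F 3 -> Grass F 3}) (u v : Grass F 3) :
  R (u + v) = R u + R v.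
Proof. exact: linearD. Qed.

Lemma upper (F : fieldType) (h2 : (2%:R : F) != 0) (h3 : (3%:R : F) != 0)
  (R : {linear Grass F 3 -> Grass F 3}) :
  is_RB0 (@gmul F 3) R -> forall y, R (R (R y)) = 0.
Proof.
move=> HR.
have N := ImN HR.
have hNa := N e0.
have hab : R e0 ** R e0 = R (R e0) + R (R e0) by rewrite HR gmul1r gmul1l linearD.
have [be hb] : exists be, R (R e0) = be *: cc.
  exists (2%:R^-1 * (R (R e0) + R (R e0)) sABC).
  have := G2 hNa; rewrite hab => h.
  by rewrite -scalerA -h half2.
have Rb0 : be *: R cc = 0.
  have := HR (R e0) e0; rewrite gmul1r hab hb kcc_l0 // -linearZZ !linearD => h.
  have : (3%:R : F) *: R (be *: cc) = 0.
    by rewrite scaler_nat !mulrS mulr0n addr0 h.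
  by move/eqP; rewrite scaler_eq0 (negbTE h3) /= linearZZ => /eqP.
have Rby : forall y, R (R (R e0) ** y) = 0.
  by move=> y; rewrite hb kcc_l linearZZ linearZZ Rb0 scaler0.
have Ryb : forall y, R (y ** R (R e0)) = 0.
  by move=> y; rewrite hb kcc_r linearZZ linearZZ Rb0 scaler0.
have RaR : forall y, R (R e0 ** R y) = 0.
  move=> y; have := HR (R e0) y; rewrite linearD Rby add0r => <-.
  by rewrite hb kcc_l0.
have RRa : forall y, R (R y ** R e0) = 0.
  move=> y; have := HR y (R e0); rewrite linearD Ryb addr0 => <-.
  by rewrite hb kcc_r0.
have RR : forall y, R (R y) = R e0 ** R y - R (R e0 ** y).
  by move=> y; rewrite HR gmul1l linearD [X in X - _]addrC addrK.
have COMM : forall y, R e0 ** R y - R y ** R e0 = R (R e0 ** y - y ** R e0).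
  move=> y; have e1 := HR e0 y; have e2 := HR y e0.
  rewrite gmul1l linearD in e1; rewrite gmul1r linearD in e2.
  by rewrite e1 e2 zm1 linearB.
have ad0 : R e0 ** R cc = 0.
  have ead : R e0 ** R cc = R (R cc).
    by rewrite HR gmul1l ccr hNa scale0r add0r.
  have eda : R cc ** R e0 = R (R cc).
    by rewrite HR gmul1r ccl hNa scale0r addr0.
  have := G4 (R cc) hNa; rewrite eda -ead (N cc : R cc sE = 0) mulr0 scale0r add0r => hs.
  set si := (X in X *: cc) in hs.
  have hmu : R e0 ** R cc = (2%:R^-1 * si) *: cc by rewrite -scalerA -hs half2.
  have h := RaR cc; rewrite hmu linearZZ in h; move/eqP: h.
  rewrite scaler_eq0 => /orP [/eqP m0|/eqP d0].
    by rewrite hmu m0 scale0r.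
  by rewrite d0 gmul0r.
have aaRy : forall y, R e0 ** (R e0 ** R y) = 0.
  by move=> y; rewrite gmulA hab hb gmulDl !kcc_l0 ?addr0.
move=> y.
rewrite (RR (R y)) RaR subr0 (RR y) gmulBr aaRy sub0r.
apply/eqP; rewrite oppr_eq0; apply/eqP.
rewrite (split2 (R e0 ** y) (y ** R e0) h2) (G4 y hNa).
rewrite RD !RZ -COMM RD !RZ hb.
rewrite gmulDr !gmulZr gmulBr aaRy gmulDr !gmulZr ccr hNa scale0r ad0 gmulA G3 //.
by rewrite subr0 !scaler0 add0r addr0 scaler0.
Qed.



Local Notation sA := (st true false false).


Definition ea (F : fieldType) : Grass F 3 :=
  [ffun S : {set 'I_3} => if [&& i0 \in S, i1 \notin S & i2 \notin S]
     || [&& i0 \notin S, i1 \in S & i2 \in S] then 1 else 0].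
Arguments ea {F}.
Lemma ea_st (F : fieldType) b0 b1 b2 :
  (ea : Grass F 3) (st b0 b1 b2) =
  if [&& b0, ~~ b1 & ~~ b2] || [&& ~~ b0, b1 & b2] then 1 else 0.
Proof. by rewrite ffunE !inE. Qed.

Definition R0f (F : fieldType) (x : Grass F 3) : Grass F 3 := x sE *: ea + x sA *: cc.

Lemma R0_lin (F : fieldType) : linear (@R0f F).
Proof. move=> k x y; rewrite /R0f; coords; gs; rewrite ?ea_st /=; ring. Qed.

HB.instance Definition _ (F : fieldType) :=
  GRing.isLinear.Build F (Grass F 3) (Grass F 3) *:%R (@R0f F) (@R0_lin F).

Lemma R0_RB (F : fieldType) : is_RB0 (@gmul F 3) (@R0f F : {linear Grass F 3 -> Grass F 3}).
Proof. move=> x y /=; rewrite /R0f; coords; gs; rewrite ?ea_st /=; ring. Qed.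

Unset Implicit Arguments.

Theorem corollary12 (F : fieldType)
  (h2 : (2%:R : F) != 0) (h3 : (3%:R : F) != 0) :
  rb_index_is (@gmul F 3) 3.
Proof.
split.
  by move=> R HR x /=; apply: upper.
move=> m Hm; rewrite leqNgt; apply/negP => hm.
have H := Hm (@R0f F : {linear Grass F 3 -> Grass F 3}) (@R0_RB F) e0.
case: m hm Hm H => [|[|[|m]]] // _ _ /=.
- move/(congr1 (fun v : Grass F 3 => v sE)); rewrite e0_st c0 /=; exact/eqP/oner_neq0.
- rewrite /R0f e0_st /= => /(congr1 (fun v : Grass F 3 => v sA)).
  rewrite cD !cZ ea_st cc_st c0 /= mulr0 addr0 mulr1; exact/eqP/oner_neq0.
- rewrite /R0f e0_st /= => /(congr1 (fun v : Grass F 3 => v sABC)).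
  rewrite !cD !cZ !ea_st !cc_st !e0_st c0 /=.
  rewrite !(mulr0, mul0r, addr0, add0r, mulr1, mul1r); exact/eqP/oner_neq0.
Qed.
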